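(* If $\Sigma$ is of type $\mathfrak d_l$ ($l\ge4$) and $\Gamma=Z_{\widetilde M}(\widetilde K)$ (of order 4), then $$d(P_\Gamma)=\begin{cases}\frac12(\psi,\psi)^{-1/2}l^{1/2}, & l\text{ even},\\ \frac{\sqrt2}{4}(\psi,\psi)^{-1/2}(2l-1)^{1/2}, & l\text{ odd}.\end{cases}$$
   Context: Let $(\mathfrak u,\theta,\langle,\rangle)$ be a reduced, compact, irreducible orthogonal involutive Lie algebra ($\mathfrak u=\mathfrak k_0\oplus\mathfrak p_*$ the $\pm1$ eigenspaces of $\theta$), $\widetilde U$ the simply connected group of $\mathfrak u$, $\widetilde K$ the fixed group of the induced involution, $\widetilde M=\widetilde U/\widetilde K$, $\widetilde{\mathrm{Exp}}(X)=\widetilde\exp(X)\widetilde K$ ($X\in\mathfrak p_*$), and $Z_{\widetilde M}(\widetilde K)$ the group of points of $\widetilde M$ fixed by all left translations by $\widetilde K$. $(\cdot,\cdot)$ is the Killing form of $\mathfrak u\otimes\mathbb C$, positive definite on $\mathfrak h_{\mathfrak p_0}=\sqrt{-1}\mathfrak h_{\mathfrak p_*}$ ($\mathfrak h_{\mathfrak p_*}$ maximal abelian in $\mathfrak p_*$); $\Sigma\subset\mathfrak h_{\mathfrak p_0}$ is the restricted root system with simple roots $\gamma_1,\dots,\gamma_l$ and highest root $\psi=\sum d_i\gamma_i$; $e_j$ defined by $(e_j,\gamma_i)=\delta_{ij}/d_j$; $\triangle=\{x:(x,\gamma_i)\ge0\ \forall i,\ (x,\psi)\le1\}$; $P_\Gamma=\{x\in\triangle:(x,e_i)\le\frac12(e_i,e_i)$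 for all $i$ with $\widetilde{\mathrm{Exp}}(\pi\sqrt{-1}e_i)\in\Gamma\}$; $d(P_\Gamma)=\max_{x\in P_\Gamma}(x,x)^{1/2}$. *)

(* Defs.v *)
From HB Require Import structures.
From mathcomp Require Import all_boot all_order all_algebra.
Set Implicit Arguments. Unset Strict Implicit. Unset Printing Implicit Defensive.
Import Order.TTheory GRing.Theory Num.Theory.
Local Open Scope ring_scope.

(* The inner product ( , ) on h_p0 ~ R^l (any Euclidean space of dim l is
   isometric to R^l with the standard dot product). *)
Definition dot (R : nzRingType) (n : nat) (u v : 'rV[R]_n) : R := (u *m v^T) 0 0.

(* Dynkin diagram of D_l, nodes 0..l-1 (paper's gamma_1..gamma_l shifted by 1):
   chain 0 - 1 - ... - (l-2), and node (l-1) attached to (l-3). *)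
Definition adjD (l i j : nat) : bool :=
  [&& ((i.+1 == j) || (j.+1 == i)), i <= l - 2 & j <= l - 2]%N
  || ((i == l - 3) && (j == l - 1))%N || ((i == l - 1) && (j == l - 3))%N.

Definition cartanD (R : nzRingType) (l : nat) (i j : 'I_l) : R :=
  if i == j then 2 else if adjD l i j then -1 else 0.

Definition dcoef (R : nzRingType) (l : nat) (i : 'I_l) : R :=
  if (((i:nat) == 0) || ((i:nat) == l - 2) || ((i:nat) == l - 1))%N then 1 else 2.

Definition hroot (R : nzRingType) (l : nat) (gamma : 'I_l -> 'rV[R]_l) : 'rV[R]_l :=
  \sum_(i < l) dcoef R i *: gamma i.

Definition alcove (R : realDomainType) (l : nat) (gamma : 'I_l -> 'rV[R]_l)
  (psi x : 'rV[R]_l) : Prop :=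
  (forall i, 0 <= dot x (gamma i)) /\ dot x psi <= 1.

(* P_Gamma, where S is the set of indices i with Exp(pi sqrt(-1) e_i) in Gamma. *)
Definition PGamma (R : realFieldType) (l : nat) (gamma e : 'I_l -> 'rV[R]_l)
  (psi : 'rV[R]_l) (S : pred 'I_l) (x : 'rV[R]_l) : Prop :=
  alcove gamma psi x /\ (forall i, S i -> dot x (e i) <= dot (e i) (e i) / 2).

(* For Gamma = Z_M(K) in type D_l (order 4): Gamma = {o} u {Exp(pi sqrt(-1) e_i) :
   d_i = 1}, i.e. the indices 0, l-2, l-1 (paper: 1, l-1, l). *)
Definition GammaIdxD (l : nat) : pred 'I_l :=
  fun i : 'I_l => (((i:nat) == 0) || ((i:nat) == l - 2) || ((i:nat) == l - 1))%N.

Definition maxnorm_is (R : rcfType) (l : nat) (P : 'rV[R]_l -> Prop) (r : R) : Prop :=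
  (exists2 x, P x & Num.sqrt (dot x x) = r) /\
  (forall x, P x -> Num.sqrt (dot x x) <= r).

(* Main.v *)
Require Import Defs.
From HB Require Import structures.
From mathcomp Require Import all_boot all_order all_algebra.
From mathcomp Require Import ring lra zify.
Set Implicit Arguments. Unset Strict Implicit. Unset Printing Implicit Defensive.
Import Order.TTheory GRing.Theory Num.Theory.
Local Open Scope ring_scope.

Ltac splitb := repeat match goal with
 | |- context[(?x <= ?y)%N] => let E := fresh in case E: (x <= y)%N
 | |- context[(?x == ?y :> nat)] => let E := fresh in case E: (x == y)
 end.

Section S.
Variable R : rcfType.
Variable n : nat.
Local Notation L := n.+4.

Lemma sum_deltaN (F : 'I_L -> R) (j : nat) : (j < L)%N ->
  \sum_(k < L) F k * ((j == k :> nat))%:R = F (inord j).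
Proof.
move=> hj; rewrite (bigD1 (inord j)) //= inordK // eqxx mulr1 big1 ?addr0 // => k hk.
have -> : (j == k :> nat) = false.
  apply/negbTE; apply: contra hk => /eqP e; apply/eqP/val_inj; rewrite /= inordK //.
by rewrite mulr0.
Qed.

Lemma sum_deltaN' (F : 'I_L -> R) (j : nat) : (j < L)%N ->
  \sum_(k < L) F k * ((k == j :> nat))%:R = F (inord j).
Proof.
move=> hj; rewrite -(sum_deltaN F hj); apply: eq_bigr => k _; by rewrite eq_sym.
Qed.

Definition gamS (i k : 'I_L) : R :=
  if (i <= n.+2)%N then (((i:nat) == k)%:R - ((i.+1) == k)%:R)
  else (((k:nat) == n.+2)%:R + ((k:nat) == n.+3)%:R).

Definition Mf (k j : 'I_L) : R :=
  if (j <= n.+1)%N then (k <= j)%N%:R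
  else if (k <= n.+2)%N then 1/2
  else if (j:nat) == n.+3 then 1/2 else -(1/2).

Definition Gam : 'M[R]_L := \matrix_(i, k) gamS i k.
Definition Mm : 'M[R]_L := \matrix_(k, j) Mf k j.

Lemma gam_row (F : 'I_L -> R) (i : 'I_L) :
  \sum_k gamS i k * F k = if (i <= n.+2)%N then F i - F (inord i.+1)
     else F (inord n.+2) + F (inord n.+3).
Proof.
rewrite /gamS; case: ifP => hi.
- rewrite (eq_bigr (fun k => F k * (i == k :> nat)%:R - F k * (i.+1 == k :> nat)%:R)); last first.
    by move=> k _; rewrite mulrBl mulrC (mulrC _ (F k)).
  rewrite sumrB sum_deltaN // sum_deltaN; last lia.
  by rewrite inord_val.
- rewrite (eq_bigr (fun k => F k * (k == n.+2 :> nat)%:R + F k * (k == n.+3 :> nat)%:R)); last first.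
    by move=> k _; rewrite mulrDl mulrC (mulrC _ (F k)).
  by rewrite big_split /= !sum_deltaN'.
Qed.

Lemma GamMm : Gam *m Mm = 1%:M.
Proof.
apply/matrixP => i j; rewrite !mxE.
rewrite (eq_bigr (fun k => gamS i k * Mf k j)); last by move=> k _; rewrite !mxE.
rewrite gam_row /Mf.
have hi := ltn_ord i; have hj := ltn_ord j.
rewrite -val_eqE /=.
case: ifP => hi2; rewrite !inordK //; try lia;
move: (i:nat) (j:nat) hi hj hi2 => a b ha hb hab;
splitb; simpl; try lia; try lra.
Qed.

Definition Cm : 'M[R]_L := \matrix_(i, j) cartanD R i j.

Lemma GamGamT : Gam *m Gam^T = Cm.
Proof.
apply/matrixP => i j; rewrite !mxE.
rewrite (eq_bigr (fun k => gamS i k * gamS j k)); last by move=> k _; rewrite !mxE.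
rewrite gam_row /gamS /cartanD /adjD.
have hi := ltn_ord i; have hj := ltn_ord j.
rewrite -val_eqE /=.
case: ifP => hi2; rewrite !inordK //; try lia;
move: (i:nat) (j:nat) hi hj hi2 => a b ha hb hab;
splitb; simpl; try lia; try lra.
Qed.

Lemma MmGam : Mm *m Gam = 1%:M.
Proof. exact: mulmx1C GamMm. Qed.

Lemma wGamT (w : 'rV[R]_L) (i : 'I_L) : (w *m Gam^T) 0 i =
  if (i <= n.+2)%N then w 0 i - w 0 (inord i.+1)
     else w 0 (inord n.+2) + w 0 (inord n.+3).
Proof.
rewrite !mxE -gam_row; apply: eq_bigr => k _; by rewrite !mxE mulrC.
Qed.

Definition dvec : 'rV[R]_L := \row_i dcoef R i.
Definition uvec : 'rV[R]_L := \row_k (((k:nat) == 0%N)%:R + ((k:nat) == 1%N)%:R).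

Lemma dvec_u : dvec = uvec *m Mm.
Proof.
apply/matrixP => z j; rewrite !mxE ord1.
rewrite (eq_bigr (fun k => Mf k j * ((k:nat) == 0%N)%:R + Mf k j * ((k:nat) == 1%N)%:R)); last first.
  by move=> k _; rewrite !mxE mulrDl mulrC (mulrC _ (Mf k j)).
rewrite big_split /= !sum_deltaN' // /Mf /dcoef !inordK //.
have hj := ltn_ord j.
move: (j:nat) hj => b hb.
splitb; simpl; try lia; try lra.
Qed.

Lemma wuT (w : 'rV[R]_L) : (w *m uvec^T) 0 0 = w 0 (inord 0) + w 0 (inord 1).
Proof.
rewrite !mxE.
rewrite (eq_bigr (fun k => w 0 k * ((k:nat) == 0%N)%:R + w 0 k * ((k:nat) == 1%N)%:R)); last first.
  by move=> k _; rewrite !mxE mulrDr.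
by rewrite big_split /= !sum_deltaN'.
Qed.

Lemma uuT : (uvec *m uvec^T) 0 0 = 2.
Proof. rewrite wuT !mxE !inordK //=; lra. Qed.

Lemma wMm0 (w : 'rV[R]_L) : (w *m Mm) 0 (inord 0) = w 0 (inord 0).
Proof.
rewrite !mxE -sum_deltaN' //; apply: eq_bigr => k _.
rewrite !mxE /Mf inordK //=; have hk := ltn_ord k; move: (k:nat) hk => b hb.
splitb; simpl; try lia; try lra.
Qed.

Lemma wMm3 (w : 'rV[R]_L) : (w *m Mm) 0 (inord n.+3) = (\sum_k w 0 k) / 2.
Proof.
rewrite !mxE mulr_suml; apply: eq_bigr => k _.
rewrite !mxE /Mf inordK //=; have hk := ltn_ord k; move: (k:nat) hk => b hb.
splitb; simpl; try lia; try lra.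
Qed.

Lemma wMm2 (w : 'rV[R]_L) : (w *m Mm) 0 (inord n.+2) = (\sum_k w 0 k) / 2 - w 0 (inord n.+3).
Proof.
rewrite !mxE mulr_suml.
rewrite (eq_bigr (fun k => w 0 k / 2 - w 0 k * ((k:nat) == n.+3)%:R)).
  by rewrite sumrB sum_deltaN'.
move=> k _.
rewrite !mxE /Mf inordK //=; have hk := ltn_ord k; move: (k:nat) hk => b hb.
splitb; simpl; try lia; try lra.
Qed.

Lemma MM0 : (Mm^T *m Mm) (inord 0) (inord 0) = 1.
Proof.
rewrite !mxE; rewrite -[RHS](@sum_deltaN' (fun _ => 1) 0%N isT); apply: eq_bigr => k _.
rewrite !mxE /Mf inordK //=; have hk := ltn_ord k; move: (k:nat) hk => b hb.
splitb; simpl; try lia; try lra.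
Qed.

Lemma MM3 : (Mm^T *m Mm) (inord n.+3) (inord n.+3) = L%:R / 4.
Proof.
rewrite !mxE (eq_bigr (fun _ => 1/4)).
  by rewrite sumr_const card_ord -mulr_natl; lra.
move=> k _.
rewrite !mxE /Mf inordK //=; have hk := ltn_ord k; move: (k:nat) hk => b hb.
splitb; simpl; try lia; try lra.
Qed.

Lemma MM2 : (Mm^T *m Mm) (inord n.+2) (inord n.+2) = L%:R / 4.
Proof.
rewrite !mxE (eq_bigr (fun _ => 1/4)).
  by rewrite sumr_const card_ord -mulr_natl; lra.
move=> k _.
rewrite !mxE /Mf inordK //=; have hk := ltn_ord k; move: (k:nat) hk => b hb.
splitb; simpl; try lia; try lra.
Qed.

End S.

Lemma sq_bound (R : realFieldType) (L : nat) (t : 'I_L -> R) :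
 (forall k, 0 <= t k /\ t k <= 1/2) -> \sum_k t k <= L%:R/4 ->
 \sum_k t k ^+ 2 <= (if ~~ odd L then L%:R/8 else (L.*2 - 1)%:R/16).
Proof.
move=> ht hS.
set K := (\sum_(k < L) (((1/4 < t k)%R : bool) : nat))%N.
have hK : K%:R = \sum_(k < L) (((1/4 < t k)%R : bool) : nat)%:R :> R by rewrite /K natr_sum.
have h1 : \sum_k t k ^+ 2 <= (\sum_k t k) / 4 + K%:R / 8.
  rewrite hK mulr_suml mulr_suml -big_split /=; apply: ler_sum => k _.
  have [h0 h2] := ht k.
  case: ltP => hb /=; rewrite expr2; nra.
have h2 : \sum_k t k ^+ 2 <= (\sum_k t k) * (3/4) - K%:R / 8.
  rewrite hK mulr_suml mulr_suml -sumrB; apply: ler_sum => k _.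
  have [h0 h2] := ht k.
  case: ltP => hb /=; rewrite expr2; nra.
case: ifP => hodd.
  lra.
set m := L./2.
have hLm : L = m.*2.+1 by rewrite -[L in LHS]odd_double_half; move/negbFE: hodd => ->.
have hR : L%:R = 2 * m%:R + 1 :> R by rewrite {1}hLm -addn1 -muln2 natrD natrM; lra.
have hR2 : (L.*2 - 1)%:R = 4 * m%:R + 1 :> R.
  have -> : (L.*2 - 1 = m * 4 + 1)%N by rewrite hLm; lia.
  by rewrite natrD natrM; lra.
rewrite hR2; rewrite hR in hS.
case: (leqP K m) => hKm.
  have : K%:R <= m%:R :> R by rewrite ler_nat.
  lra.
have : (m.+1)%:R <= K%:R :> R by rewrite ler_nat.
rewrite -addn1 natrD; lra.
Qed.

Lemma cnt_lt (L m : nat) : (\sum_(k < L) ((k < m)%N : nat) = minn m L)%N.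
Proof.
elim: L => [|L IH]; first by rewrite big_ord0 minn0.
by rewrite big_ord_recr /= IH; case: ltnP => h /=; lia.
Qed.

Lemma final_bound (R : realFieldType) (n : nat) (W : 'I_(n.+4) -> R) :
  (forall p, (p <= n.+2)%N -> W (inord p.+1) <= W (inord p)) ->
  0 <= W (inord n.+2) + W (inord n.+3) ->
  W (inord 0) <= 1/2 ->
  \sum_k W k <= (n.+4)%:R/4 ->
  \sum_k W k - 2 * W (inord n.+3) <= (n.+4)%:R/4 ->
  \sum_k W k ^+ 2 <= (if ~~ odd n.+4 then (n.+4)%:R / 8 else ((n.+4).*2 - 1)%:R / 16).
Proof.
move=> hmono hlast h0 h3 h2.
have hup : forall p, (p <= n.+2)%N -> W (inord p) <= W (inord 0).
  elim=> [|p IH] hp; first by [].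
  exact: le_trans (hmono p (ltnW hp)) (IH (ltnW hp)).
have hdown : forall q, (q <= n.+2)%N -> W (inord n.+2) <= W (inord (n.+2 - q)%N).
  elim=> [|q IH] hq; first by rewrite subn0.
  have := hmono (n.+2 - q.+1)%N (leq_subr _ _).
  have -> : ((n.+2 - q.+1).+1 = n.+2 - q)%N by lia.
  move=> h; exact: le_trans (IH (ltnW hq)) h.
have hlo : forall p, (p <= n.+2)%N -> W (inord n.+2) <= W (inord p).
  by move=> p hp; have := hdown (n.+2 - p)%N (leq_subr _ _); rewrite subKn.
have h3b : `|W (inord n.+3)| <= W (inord n.+2).
  have := hmono n.+2 (leqnn _); rewrite ler_norml; move=> h; apply/andP; split; lra.
have hfk : forall k : 'I_(n.+4), W k = W (inord k) by move=> k; rewrite inord_val.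
have hn0 := normr_ge0 (W (inord n.+3)).
have ht : forall k : 'I_(n.+4), 0 <= `|W k| /\ `|W k| <= 1/2.
  move=> k; split; first exact: normr_ge0.
  rewrite hfk; have hk := ltn_ord k; case: (leqP k n.+2) => hk2.
    have := hlo _ hk2; have := hup _ hk2 => h4 h5.
    rewrite ger0_norm; lra.
  have -> : (k:nat) = n.+3 by lia.
  have := hup _ (leqnn n.+2); lra.
have hlastk : (ord_max : 'I_(n.+4)) = inord n.+3 by apply: val_inj; rewrite /= inordK.
have hsumt : \sum_k `|W k| <= (n.+4)%:R / 4.
  have hsplit : forall F : 'I_(n.+4) -> R, \sum_k F k = \sum_(i < n.+3) F (widen_ord (leqnSn _) i) + F ord_max.
    by move=> F; rewrite big_ord_recr.
  have hsw : \sum_(i < n.+3) `|W (widen_ord (leqnSn _) i)| = \sum_(i < n.+3) W (widen_ord (leqnSn _) i).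
    apply: eq_bigr => i _; rewrite ger0_norm // hfk; have := hlo (widen_ord (leqnSn _) i) (ltn_ord i).
    lra.
  move: h3 h2; rewrite !hsplit hsw hlastk.
  case: (lerP 0 (W (inord n.+3))) => hs; [rewrite ger0_norm | rewrite ltr0_norm]; lra.
have hsb := sq_bound ht hsumt.
apply: le_trans hsb; rewrite le_eqVlt; apply/orP; left; apply/eqP.
by apply: eq_bigr => k _; rewrite real_normK ?num_real.
Qed.

Ltac splitb2 := repeat match goal with
 | |- context[(?x <= ?y)%N] => let E := fresh in case E: (x <= y)%N
 | |- context[(?x == ?y :> nat)] => let E := fresh in case E: (x == y)
 end.

Definition w0 (R : realFieldType) (L : nat) (k : 'I_L) : R :=
  if (k < L./2)%N then 1/2 else if odd L && ((k:nat) == L./2) then 1/4 else 0.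

Lemma sum_eq1 (R : realFieldType) (L m : nat) : (m < L)%N ->
  \sum_(k < L) (((k:nat) == m)%:R : R) = 1.
Proof.
move=> hm; rewrite (bigD1 (Ordinal hm)) //= eqxx big1 ?addr0 // => k hk.
have -> : ((k:nat) == m) = false.
  by apply/negbTE; apply: contra hk => /eqP h; apply/eqP/val_inj.
by [].
Qed.

Lemma w0_facts (R : realFieldType) (n : nat) :
  let w := @w0 R n.+4 in
  (forall p, (p <= n.+2)%N -> w (inord p.+1) <= w (inord p)) /\
  0 <= w (inord n.+2) + w (inord n.+3) /\
  w (inord 0) = 1/2 /\ w (inord 1) = 1/2 /\ w (inord n.+3) = 0 /\
  \sum_k w k = (n.+4)%:R / 4 /\
  \sum_k w k ^+ 2 = (if ~~ odd n.+4 then (n.+4)%:R / 8 else ((n.+4).*2 - 1)%:R / 16).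
Proof.
move=> w.
have hm := odd_double_half n.+4.
rewrite -muln2 in hm.
have hw : forall k : 'I_(n.+4), w k = ((k < (n.+4)./2)%N)%:R / 2 + ((odd n.+4 && ((k:nat) == (n.+4)./2)))%:R / 4.
  move=> k; rewrite /w /w0; have hk := ltn_ord k.
  move: (odd n.+4) ((n.+4)./2) hm (k:nat) hk => b m hm' a ha.
  case: b hm' => hm' /=; splitb2; simpl; try lia; try lra.
have hw2 : forall k : 'I_(n.+4), w k ^+ 2 = ((k < (n.+4)./2)%N)%:R / 4 + ((odd n.+4 && ((k:nat) == (n.+4)./2)))%:R / 16.
  move=> k; rewrite /w /w0; have hk := ltn_ord k.
  move: (odd n.+4) ((n.+4)./2) hm (k:nat) hk => b m hm' a ha.
  case: b hm' => hm' /=; splitb2; simpl; try lia; rewrite expr2; try lra.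
set b := odd n.+4 in hm hw hw2 *.
set m := (n.+4)./2 in hm hw hw2 *.
clearbody b m.
have hs1 : \sum_(k < n.+4) (((k < m)%N)%:R : R) = m%:R.
  rewrite -natr_sum cnt_lt; congr (_%:R); lia.
have hs2 : \sum_(k < n.+4) (((b && ((k:nat) == m)))%:R : R) = b%:R.
  clear hw hw2; case: b hm => hm' /=.
    apply: sum_eq1; lia.
  by rewrite big1.
have hL : (n.+4)%:R = b%:R + m%:R * 2 :> R.
  by rewrite -natrM -natrD hm.
split.
  move=> p hp; rewrite !hw !inordK //; try lia.
  clear hs2 hL hw hw2 hs1; case: b hm => hm' /=; splitb2; simpl; try lia; try lra.
split.
  rewrite !hw !inordK //.
  clear hs2 hL hw hw2 hs1; case: b hm => hm' /=; splitb2; simpl; try lia; try lra.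
split.
  rewrite !hw !inordK //.
  clear hs2 hL hw hw2 hs1; case: b hm => hm' /=; splitb2; simpl; try lia; try lra.
split.
  rewrite !hw !inordK //.
  clear hs2 hL hw hw2 hs1; case: b hm => hm' /=; splitb2; simpl; try lia; try lra.
split.
  rewrite !hw !inordK //.
  clear hs2 hL hw hw2 hs1; case: b hm => hm' /=; splitb2; simpl; try lia; try lra.
split.
  rewrite (eq_bigr _ (fun k _ => hw k)) big_split /= -!mulr_suml hs1 hs2 hL; lra.
rewrite (eq_bigr _ (fun k _ => hw2 k)) big_split /= -!mulr_suml hs1 hs2 hL.
clear hs2 hL hw hw2 hs1; case: b hm => hm /=.
  have -> : ((n.+4).*2 - 1 = m * 4 + 1)%N by lia.
  rewrite natrD natrM; lra.
lra.
Qed.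

Unset Implicit Arguments.

Theorem mainTheorem18 (R : rcfType) (l : nat) (hl : (4 <= l)%N) (c : R) (hc : 0 < c)
  (gamma e : 'I_l -> 'rV[R]_l)
  (hgram : forall i j, dot (gamma i) (gamma j) = c * cartanD R i j)
  (he : forall i j, dot (e j) (gamma i) = (i == j)%:R / dcoef R j) :
  let psi := hroot gamma in
  maxnorm_is (PGamma gamma e psi (@GammaIdxD l))
    (if ~~ odd l then
       1 / 2 * (Num.sqrt (dot psi psi))^-1 * Num.sqrt l%:R
     else
       Num.sqrt 2 / 4 * (Num.sqrt (dot psi psi))^-1 * Num.sqrt (l.*2 - 1)%:R).
Proof.
move=> psi.
have [n hn] : exists n, l = n.+4 by exists (l - 4)%N; lia.
subst l.
have hc0 : c != 0 by rewrite gt_eqF.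
pose G : 'M[R]_(n.+4) := \matrix_(i, j) gamma i 0 j.
pose E : 'M[R]_(n.+4) := \matrix_(i, j) e i 0 j.
pose Dinv : 'M[R]_(n.+4) := \matrix_(j, i) ((i == j)%:R / dcoef R j).
have hdotG : forall (u : 'rV_(n.+4)) i, dot u (gamma i) = (u *m G^T) 0 i.
  by move=> u i; rewrite /dot !mxE; apply: eq_bigr => k _; rewrite !mxE.
have hdotE : forall (u : 'rV_(n.+4)) i, dot u (e i) = (u *m E^T) 0 i.
  by move=> u i; rewrite /dot !mxE; apply: eq_bigr => k _; rewrite !mxE.
have hGG : G *m G^T = c *: Cm R n.
  apply/matrixP => i j; rewrite [RHS]mxE [in RHS]mxE -hgram /dot !mxE.
  by apply: eq_bigr => k _; rewrite !mxE.
have hEG : E *m G^T = Dinv.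
  apply/matrixP => j i; rewrite [RHS]mxE -he /dot !mxE.
  by apply: eq_bigr => k _; rewrite !mxE.
have hMCM : Mm R n *m Cm R n *m (Mm R n)^T = 1%:M.
  by rewrite -GamGamT !mulmxA MmGam mul1mx -trmx_mul MmGam trmx1.
have hQQ : (Mm R n *m G) *m (Mm R n *m G)^T = c *: 1%:M.
  rewrite trmx_mul !mulmxA -(mulmxA (Mm R n) G) hGG.
  by rewrite -scalemxAr -scalemxAl hMCM.
have hQ' : forall p (B : 'M_(n.+4, p)), G^T *m ((Mm R n)^T *m (Mm R n *m (G *m B))) = c *: B.
  move=> p B.
  have h1 : (c^-1 *: (Mm R n *m G)) *m (Mm R n *m G)^T = 1%:M.
    by rewrite -scalemxAl hQQ scalerA mulVf // scale1r.
  have h2 := mulmx1C h1.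
  rewrite -scalemxAr trmx_mul in h2.
  have h3 : G^T *m (Mm R n)^T *m (Mm R n *m G) = c *: 1%:M.
    by rewrite -h2 scalerA mulfV // scale1r.
  by rewrite !mulmxA -(mulmxA _ (Mm R n)) h3 -scalemxAl mul1mx.
pose wof (x : 'rV[R]_(n.+4)) := x *m G^T *m (Mm R n)^T.
have hA : forall x i, dot x (gamma i) = (wof x *m (Gam R n)^T) 0 i.
  by move=> x i; rewrite hdotG /wof -!mulmxA -trmx_mul GamMm trmx1 mulmx1.
have hB : forall x, dot x x = c^-1 * (wof x *m (wof x)^T) 0 0.
  move=> x.
  have -> : wof x *m (wof x)^T = c *: (x *m x^T).
    by rewrite /wof !trmx_mul !trmxK -!mulmxA hQ' scalemxAr.
  by rewrite mxE mulrA mulVf // mul1r.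
have hE : E = c^-1 *: (Dinv *m ((Mm R n)^T *m (Mm R n *m G))).
  have h1 := hQ' _ (1%:M : 'M_(n.+4)).
  rewrite mulmx1 in h1.
  rewrite -[LHS]mulmx1.
  have -> : (1%:M : 'M_(n.+4)) = c^-1 *: (G^T *m ((Mm R n)^T *m (Mm R n *m G))).
    by rewrite h1 scalerA mulVf // scale1r.
  by rewrite -scalemxAr (mulmxA E) hEG.
have hDinv : forall (y : 'rV_(n.+4)) j, (y *m Dinv^T) 0 j = y 0 j / dcoef R j.
  move=> y j; rewrite !mxE (bigD1 j) //= big1 ?addr0.
    by rewrite !mxE eqxx mul1r.
  by move=> k hk; rewrite !mxE (negbTE hk) mul0r mulr0.
have hD : forall x j, dot x (e j) = c^-1 * (wof x *m Mm R n) 0 j / dcoef R j.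
  move=> x j; rewrite hdotE hE.
  rewrite linearZ /= -scalemxAr mxE -mulrA; congr (_ * _).
  by rewrite !trmx_mul trmxK !mulmxA -hDinv /wof ?mulmxA.
have hpsi : psi = dvec R n *m G.
  apply/matrixP => z k; rewrite ord1 /psi /hroot summxE !mxE.
  by apply: eq_bigr => i _; rewrite !mxE.
have hwG : forall y : 'rV_(n.+4), wof (y *m Mm R n *m G) = c *: y.
  move=> y; rewrite /wof -(mulmxA (y *m Mm R n)) hGG -scalemxAr -scalemxAl.
  by rewrite -!mulmxA (mulmxA (Mm R n)) hMCM mulmx1.
have hwZ : forall a x, wof (a *: x) = a *: wof x.
  by move=> a x; rewrite /wof -!scalemxAl.
have hpsix : forall x, dot x psi = (wof x *m (uvec R n)^T) 0 0.
  by move=> x; rewrite /dot hpsi dvec_u !trmx_mul /wof !mulmxA.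
have hpp : dot psi psi = 2 * c.
  rewrite hpsix hpsi dvec_u hwG -scalemxAl mxE uuT; lra.
have hd1 : forall j : 'I_(n.+4), GammaIdxD j -> dcoef R j = 1.
  by move=> j; rewrite /dcoef /GammaIdxD => ->.
have hS3 : forall j : 'I_(n.+4), GammaIdxD j <-> (j = inord 0 \/ j = inord n.+2 \/ j = inord n.+3).
  move=> j; rewrite /GammaIdxD !subSS !subn0; split.
    case/orP => [/orP[]|] /eqP h; [left|right;left|right;right];
      by apply/val_inj; rewrite /= inordK // h.
  by case=> [->|[->|->]]; rewrite !inordK // eqxx ?orbT.
have hee : forall j, GammaIdxD j -> dot (e j) (e j) = c^-1 * ((Mm R n)^T *m Mm R n) j j.
  move=> j hj; rewrite hD hd1 // divr1; congr (_ * _).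
  have -> : wof (e j) = 'e_j *m (Mm R n)^T.
    have -> : e j = row j E by apply/matrixP => z k; rewrite ord1 !mxE.
    rewrite /wof -row_mul hEG; congr (_ *m _).
    apply/matrixP => z k; rewrite ord1 !mxE hd1 // divr1 eqxx /= eq_sym.
    done.
  by rewrite -mulmxA -rowE mxE.
rewrite hpp.
set B : R := if ~~ odd n.+4 then (n.+4)%:R / 8 else ((n.+4).*2 - 1)%:R / 16.
set v := (if ~~ odd n.+4 then _ else _).
have hc2 : 0 <= 2 * c by lra.
have hv0 : 0 <= v.
  rewrite /v; case: ifP => _; rewrite !mulr_ge0 ?sqrtr_ge0 ?invr_ge0 //; rewrite ?sqrtr_ge0 //; lra.
have hv2 : v ^+ 2 = c^-1 * B.
  rewrite /v /B; case: ifP => _; rewrite !exprMn !exprVn !sqr_sqrtr ?ler0n //; lra.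
have hsq : forall s, 0 <= s -> s <= B -> Num.sqrt (c^-1 * s) <= v.
  move=> s hs0 hs; rewrite -(ger0_norm hv0) -sqrtr_sqr ler_sqrt ?sqr_ge0 // hv2.
  by rewrite ler_pM2l ?invr_gt0.
have hsq' : forall s, s = B -> Num.sqrt (c^-1 * s) = v.
  by move=> s ->; rewrite -hv2 sqrtr_sqr ger0_norm.
split; last first.
  move=> x [[hal hps] hS].
  set W := wof x.
  have hmono : forall p, (p <= n.+2)%N -> W 0 (inord p.+1) <= W 0 (inord p).
    move=> p hp; have := hal (inord p); rewrite hA wGamT inordK ?hp //; last lia.
    lra.
  have hlast : 0 <= W 0 (inord n.+2) + W 0 (inord n.+3).
    by have := hal (inord n.+3); rewrite hA wGamT inordK //= ltnn.
  have hkey : forall a b, c^-1 * a <= c^-1 * b / 2 -> a <= b / 2.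
    have hci : 0 < c^-1 by rewrite invr_gt0.
    by move=> a b h; rewrite -(ler_pM2l hci) mulrA.
  have hG0 : GammaIdxD (inord 0 : 'I_(n.+4)) by apply/hS3; left.
  have hG2 : GammaIdxD (inord n.+2 : 'I_(n.+4)) by apply/hS3; right; left.
  have hG3 : GammaIdxD (inord n.+3 : 'I_(n.+4)) by apply/hS3; right; right.
  have h0 : W 0 (inord 0) <= 1/2.
    have := hS _ hG0; rewrite hD hee // hd1 // divr1 wMm0 MM0 => /hkey; lra.
  have h3 : \sum_k W 0 k <= (n.+4)%:R/4.
    have := hS _ hG3; rewrite hD hee // hd1 // divr1 wMm3 MM3 => /hkey; lra.
  have h2 : \sum_k W 0 k - 2 * W 0 (inord n.+3) <= (n.+4)%:R/4.
    have := hS _ hG2; rewrite hD hee // hd1 // divr1 wMm2 MM2 => /hkey; lra.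
  have hsb := @final_bound _ _ (fun k : 'I_(n.+4) => W 0 k) hmono hlast h0 h3 h2.
  have hWW : (W *m W^T) 0 0 = \sum_k W 0 k ^+ 2.
    rewrite mxE; apply: eq_bigr => k _; by rewrite [W^T _ _]mxE expr2.
  rewrite hB; apply: hsq; rewrite hWW //.
  by apply: sumr_ge0 => k _; exact: sqr_ge0.
pose W0 : 'rV[R]_(n.+4) := \row_k w0 R k.
exists (c^-1 *: (W0 *m Mm R n *m G)); last first.
  rewrite hB hwZ hwG scalerA mulVf // scale1r; apply: hsq'.
  have [_ [_ [_ [_ [_ [_ hA7]]]]]] := w0_facts R n.
  rewrite /B -hA7 mxE; apply: eq_bigr => k _; by rewrite !mxE expr2.
have hw0 : wof (c^-1 *: (W0 *m Mm R n *m G)) = W0.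
  by rewrite hwZ hwG scalerA mulVf // scale1r.
have [hA1 [hA2 [hA3 [hA4 [hA5 [hA6 hA7]]]]]] := w0_facts R n.
have hci : 0 < c^-1 by rewrite invr_gt0.
have hkey : forall a b, a <= b / 2 -> c^-1 * a <= c^-1 * b / 2.
  by move=> a b h; rewrite -mulrA ler_pM2l.
split; first split.
- move=> i; rewrite hA hw0 wGamT !mxE; case: ifP => hi.
    by rewrite subr_ge0; have := hA1 i hi; rewrite inord_val.
  exact: hA2.
- rewrite hpsix hw0 wuT !mxE hA3 hA4.
  by rewrite -splitr.
- move=> j hj; rewrite hD hee // hd1 // divr1 hw0; apply: hkey.
  have hsW : \sum_k W0 0 k = (n.+4)%:R / 4.
    by rewrite -hA6; apply: eq_bigr => k _; rewrite mxE.
  move/hS3: hj => [->|[->|->]].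
  + by rewrite wMm0 MM0 mxE hA3.
  + by rewrite wMm2 MM2 mxE hA5 subr0 hsW.
  + by rewrite wMm3 MM3 hsW.
Qed.
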